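(* Let $N$ be a finite set with $n=|N|\geq 2$, and let $\mathcal{D}\subseteq \mathrm{DAG}(N)$ be a facet of the family-variable polytope $P_N$ (in the sense that $\mathrm{conv}\{\eta_G : G\in\mathcal{D}\}$ is a facet of $P_N$). Then the following conditions are equivalent: (a) $\mathcal{D}$ is closed under Markov equivalence, i.e. whenever $G,H\in\mathrm{DAG}(N)$ are Markov equivalent and $G\in\mathcal{D}$, then $H\in\mathcal{D}$; (b) $\mathcal{D}$ contains every full graph over $N$; (c) $\mathcal{D}$ is score equivalent (SE).
   Context: $\mathrm{DAG}(N)$ is the set of acyclic directed graphs with node set $N$; $\mathrm{pa}_G(a)$ denotes the parent set of $a$ in $G$. Two graphs $G,H\in\mathrm{DAG}(N)$ are Markov equivalent ($G\sim H$) if they have the same adjacencies and the same immoralities (induced subgraphs $a\to c\leftarrow b$ with $a,b$ non-adjacent). A full graph is an acyclic directed graph over $N$ in which every pair of distinct nodes is adjacent (all full graphs are Markov equivalent). Let $\Upsilon=\{(a|B): a\in N,\ \emptyset\neq B\subseteq N\setminus\{a\}\}$. For $G\in\mathrm{DAG}(N)$ the family-variable vector $\eta_G\in\mathbb{R}^{\Upsilon}$ has $\eta_G(a|B)=1$ if $B=\mathrm{pa}_G(a)$ and $0$ otherwise. The family-variable polytope is $P_N=\mathrm{conv}\{\eta_G: G\in\mathrm{DAG}(N)\}$. A set $\mathcal{D}\subseteq\mathrm{DAG}(N)$ is called a face (resp. facet) of $P_N$ if $\mathrm{conv}\{\eta_G:G\in\mathcal{D}\}$ is a face (resp. facet, i.e.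 face of dimension $\dim P_N-1$) of $P_N$. A vector $o\in\mathbb{R}^{\Upsilon}$ is an SE (score equivalent) objective if $\langle o,\eta_G\rangle=\langle o,\eta_H\rangle$ whenever $G\sim H$. A face $F$ of $P_N$ is SE if there exist an SE objective $o$ and $u\in\mathbb{R}$ with $P_N\subseteq\{v:\langle o,v\rangle\le u\}$ and $F=\{v\in P_N:\langle o,v\rangle=u\}$; a set of graphs is SE if the corresponding face is SE. *)

(* Defs.v *)
From HB Require Import structures.
From mathcomp Require Import all_boot all_order all_algebra.
Set Implicit Arguments. Unset Strict Implicit. Unset Printing Implicit Defensive.
Import Order.TTheory GRing.Theory Num.Theory.
Local Open Scope ring_scope.

Section DAGs.
Variable N : finType.

(* A directed graph over N is given by its parent-set function:
   there is an arrow x -> y iff x \in g y. *)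
Definition graph := {ffun N -> {set N}}.

Definition arrow (g : graph) : rel N := fun x y => x \in g y.

(* acyclic: no directed cycle (including no self-loop) *)
Definition acyclicb (g : graph) : bool :=
  [forall x, forall y, arrow g x y ==> ~~ connect (arrow g) y x].

Definition DAG := {g : graph | acyclicb g}.

Definition pa (G : DAG) (a : N) : {set N} := val G a.

Definition adj (G : DAG) (a b : N) : bool := (a \in pa G b) || (b \in pa G a).

Definition immorality (G : DAG) (a c b : N) : bool :=
  [&& a \in pa G c, b \in pa G c, a != b & ~~ adj G a b].

Definition markov_equiv (G H : DAG) : Prop :=
  (forall a b, adj G a b = adj H a b) /\
  (forall a c b, immorality G a c b = immorality H a c b).

Definition full_graph (G : DAG) : Prop := forall a b, a != b -> adj G a b.

Definition upsb (p : N * {set N}) : bool := (p.2 != set0) && (p.1 \notin p.2).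
Definition Upsilon := {p : N * {set N} | upsb p}.

Variable R : realFieldType.

Definition vec := Upsilon -> R.

Definition eta (G : DAG) : vec :=
  fun i => if pa G (val i).1 == (val i).2 then 1 else 0.

Definition dot (o v : vec) : R := \sum_(i : Upsilon) o i * v i.

Definition conv (D : {set DAG}) : vec -> Prop :=
  fun v => exists lam : DAG -> R,
    [/\ forall G, 0 <= lam G, forall G, G \notin D -> lam G = 0,
        \sum_(G : DAG) lam G = 1 &
        forall i, v i = \sum_(G : DAG) lam G * eta G i].

Definition P_N : vec -> Prop := conv setT.

Definition face_by (o : vec) (u : R) (F : vec -> Prop) : Prop :=
  (forall v, P_N v -> dot o v <= u) /\
  (forall v, F v <-> (P_N v /\ dot o v = u)).

Definition is_face (D : {set DAG}) : Prop :=
  exists o u, face_by o u (conv D).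

(* affine dimension of conv{eta_G : G in D}: the rank of the difference
   vectors eta_G - eta_G0 (G in D) for some G0 in D; -1 if D is empty *)
Definition diff_mx (D : {set DAG}) (G0 : DAG) :
  'M[R]_(#|{: DAG}|, #|{: Upsilon}|) :=
  \matrix_(i, j) (if enum_val i \in D
                  then eta (enum_val i) (enum_val j) - eta G0 (enum_val j)
                  else 0).

Definition affdim (D : {set DAG}) : int :=
  if [pick G in D] is Some G0 then (\rank (diff_mx D G0))%:Z else (-1)%R.

Definition is_facet (D : {set DAG}) : Prop :=
  is_face D /\ affdim D = affdim setT - 1.

Definition SE_objective (o : vec) : Prop :=
  forall G H, markov_equiv G H -> dot o (eta G) = dot o (eta H).

Definition is_SE (D : {set DAG}) : Prop :=
  exists o u, SE_objective o /\ face_by o u (conv D).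

Definition closed_under_ME (D : {set DAG}) : Prop :=
  forall G H, markov_equiv G H -> G \in D -> H \in D.

Definition contains_full (D : {set DAG}) : Prop :=
  forall G, full_graph G -> G \in D.

End DAGs.

(* Main.v *)
Require Import Defs.
From HB Require Import structures.
From mathcomp Require Import all_boot all_order all_algebra.
From mathcomp Require Import zify ring lra.
Set Implicit Arguments. Unset Strict Implicit. Unset Printing Implicit Defensive.
Import Order.TTheory GRing.Theory Num.Theory.

Module M1.

Section Basic.
Variable N : finType.

Lemma notin_pa (G : DAG N) a : a \notin pa G a.
Proof.
case: G => g Hg; rewrite /pa /=; apply/negP => H.
move: Hg => /forallP /(_ a) /forallP /(_ a) /implyP Hg.
by move: (Hg H); rewrite connect0.
Qed.

Lemma acyc_of_rank (g : graph N) (h : N -> nat) :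
  (forall x y, arrow g x y -> h x < h y) -> acyclicb g.
Proof.
move=> Hh; apply/forallP => x; apply/forallP => y; apply/implyP => Hxy.
apply/negP => /connectP [p Hp Hl].
have: h y <= h (last y p).
  elim: p y Hp {Hl Hxy} => [|z p IH] y //= /andP [Hyz Hp].
  exact: (leq_trans (ltnW (Hh _ _ Hyz)) (IH _ Hp)).
by rewrite -Hl leqNgt (Hh _ _ Hxy).
Qed.

Lemma acycP (G : DAG N) x y : arrow (val G) x y -> ~~ connect (arrow (val G)) y x.
Proof.
case: G => g /= Hg; move: Hg => /forallP /(_ x) /forallP /(_ y) /implyP; exact.
Qed.

Lemma connect_antisym (G : DAG N) x y :
  x != y -> connect (arrow (val G)) x y -> ~~ connect (arrow (val G)) y x.
Proof.
move=> Hne /connectP [[|z p] /= Hp Hl]; first by rewrite Hl eqxx in Hne.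
move: Hp => /andP [Hxz Hp]; apply/negP => Hyx.
have Hzx : connect (arrow (val G)) z x.
  apply: connect_trans Hyx; apply/connectP; by exists p.
by move: (acycP Hxz); rewrite Hzx.
Qed.

Definition mkDAG {g : graph N} (H : acyclicb g) : DAG N := exist _ g H.

Lemma pa_mk (g : graph N) (H : acyclicb g) a : pa (mkDAG H) a = g a.
Proof. by []. Qed.

Lemma DAG_eq (G H : DAG N) : (forall a, pa G a = pa H a) -> G = H.
Proof. by move=> E; apply: val_inj; apply/ffunP => a; apply: E. Qed.

Definition keyf (cls : N -> nat) (x : N) : nat := cls x * #|N| + enum_rank x.

Lemma lex_arith a b rx ry n : rx < n -> ry < n ->
  (a * n + rx < b * n + ry) = (a < b) || ((a == b) && (rx < ry)).
Proof.
move=> Hx Hy; case: (ltngtP a b) => H /=.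
- have H2 : a * n + n <= b * n by rewrite addnC -mulSn leq_mul2r H orbT.
  apply: (leq_trans _ (leq_trans H2 (leq_addr _ _))); by rewrite ltn_add2l.
- apply/negbTE; rewrite -leqNgt.
  have H2 : b * n + n <= a * n by rewrite addnC -mulSn leq_mul2r H orbT.
  apply: (leq_trans _ (leq_trans H2 (leq_addr _ _))); by rewrite ltnW // ltn_add2l.
- by rewrite H ltn_add2l.
Qed.

Lemma key_lt cls x y :
  (keyf cls x < keyf cls y) = (cls x < cls y) || ((cls x == cls y) && (enum_rank x < enum_rank y)).
Proof. by rewrite /keyf lex_arith //; apply: ltn_ord. Qed.

Lemma key_inj cls : injective (keyf cls).
Proof.
move=> x y E.
have H1 := key_lt cls x y; have H2 := key_lt cls y x.
rewrite E ltnn in H1 H2.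
have Ec : cls x = cls y by move: H1 H2; case: ltngtP.
rewrite Ec eqxx ltnn andTb orFb in H1 H2.
suff: enum_rank x = enum_rank y by apply: enum_rank_inj.
move: (enum_rank x) (enum_rank y) H1 H2 => i j.
by case: (ltngtP (val i) (val j)) => // /val_inj.
Qed.

Definition fullg (cls : N -> nat) : graph N :=
  [ffun x => [set y | keyf cls y < keyf cls x]].

Lemma fullg_acyc cls : acyclicb (fullg cls).
Proof. by apply: (@acyc_of_rank _ (keyf cls)) => x y; rewrite /arrow ffunE inE. Qed.

Definition fullD cls := mkDAG (fullg_acyc cls).

Lemma pa_fullD cls x y : (y \in pa (fullD cls) x) = (keyf cls y < keyf cls x).
Proof. by rewrite /pa /= ffunE inE. Qed.

Lemma full_fullD cls : full_graph (fullD cls).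
Proof.
move=> a b Hab; rewrite /adj !pa_fullD.
case: (ltngtP (keyf cls a) (keyf cls b)) => //= H.
by move/key_inj: H => H; rewrite H eqxx in Hab.
Qed.

Lemma adj_irr (G : DAG N) a : adj G a a = false.
Proof. by rewrite /adj orbb; apply/negbTE; apply: notin_pa. Qed.

Lemma full_ME (G H : DAG N) : full_graph G -> full_graph H -> markov_equiv G H.
Proof.
move=> FG FH; split.
- move=> a b; case: (eqVneq a b) => [->|Hab]; first by rewrite !adj_irr.
  by rewrite FG // FH.
- move=> a c b; rewrite /immorality.
  case: (eqVneq a b) => [->|Hab]; first by rewrite /= !andbF.
  by rewrite FG // FH // !andbF.
Qed.

End Basic.

End M1.
Import M1.

Module M2.
Local Open Scope ring_scope.

Section Face.
Variable N : finType.
Variable R : realFieldType.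
Notation etaG := (Defs.eta R).

Definition mkU (a : N) (B : {set N}) (H : upsb (a, B)) : Upsilon N := exist _ (a, B) H.

Lemma etaE (G : DAG N) (i : Upsilon N) :
  etaG G i = if pa G (val i).1 == (val i).2 then 1 else 0.
Proof. by []. Qed.

Lemma eta_inj (G H : DAG N) : (forall i, etaG G i = etaG H i) -> G = H.
Proof.
move=> E.
have key : forall (G1 G2 : DAG N), (forall i, etaG G1 i = etaG G2 i) ->
    forall a, pa G1 a != set0 -> pa G1 a = pa G2 a.
  move=> G1 G2 E12 a Hne.
  have Hu : upsb (a, pa G1 a) by rewrite /upsb /= Hne notin_pa.
  have := E12 (mkU Hu); rewrite !etaE /= eqxx.
  by case: eqP => [->|_] // /eqP; rewrite oner_eq0.
apply: DAG_eq => a.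
case: (eqVneq (pa G a) set0) => HG; last exact: key.
case: (eqVneq (pa H a) set0) => HH; first by rewrite HG HH.
by apply/esym; apply: key => // i; rewrite E.
Qed.

Lemma eta_P (G : DAG N) : P_N (etaG G).
Proof.
exists (fun H => if H == G then 1 else 0); split.
- by move=> H; case: eqP.
- by move=> H; rewrite in_setT.
- by rewrite (bigD1 G) //= eqxx big1 ?addr0 // => H /negbTE ->.
- move=> i; rewrite (bigD1 G) //= eqxx mul1r big1 ?addr0 // => H /negbTE ->; by rewrite mul0r.
Qed.

Lemma conv_in (D : {set DAG N}) (H : DAG N) : conv D (etaG H) -> H \in D.
Proof.
case=> lam [Hge Hout Hsum Hv].
have Heq : forall G, lam G != 0 -> G = H.
  move=> G HG; apply: eta_inj => i.
  have HlG : 0 < lam G by rewrite lt_def HG Hge.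
  have Hv' := Hv i.
  rewrite [RHS]etaE; case HHi: (pa H (val i).1 == (val i).2); rewrite etaE HHi in Hv'.
  +
    have Z : \sum_(K : DAG N) lam K * (1 - etaG K i) = 0.
      rewrite (eq_bigr (fun K => lam K - lam K * etaG K i)); last by move=> K _; rewrite mulrBr mulr1.
      by rewrite sumrB Hsum -Hv' subrr.
    have := psumr_eq0P _ Z (i:=G) isT.
    have Hf : forall K : DAG N, true -> 0 <= lam K * (1 - etaG K i).
      by move=> K _; apply: mulr_ge0 => //; rewrite etaE; case: eqP => _; rewrite ?subrr ?subr0 ?ler01.
    move=> /(_ Hf) /eqP; rewrite mulf_eq0 (negbTE HG) /= subr_eq0 => /eqP; exact: esym.
  + have Z : \sum_(K : DAG N) lam K * etaG K i = 0 by rewrite -Hv'.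
    have Hf : forall K : DAG N, true -> 0 <= lam K * etaG K i.
      by move=> K _; apply: mulr_ge0 => //; rewrite etaE; case: eqP => _; rewrite ?ler01.
    have := psumr_eq0P Hf Z (i:=G) isT; move=> /eqP; rewrite mulf_eq0 (negbTE HG) /= => /eqP; exact.
have HlH : lam H != 0.
  apply/negP => /eqP HH; move: Hsum; rewrite big1 => [/eqP|G _]; first by rewrite eq_sym oner_eq0.
  by case: (eqVneq (lam G) 0) => // /Heq ->.
by apply: contraR HlH => /Hout ->.
Qed.

Variable D : {set DAG N}.
Variables (o : vec N R) (u : R).
Hypothesis Hf : face_by o u (conv D).

Lemma dot_le (G : DAG N) : dot o (etaG G) <= u.
Proof. by case: Hf => H _; apply: H; apply: eta_P. Qed.

Lemma inD_dot (G : DAG N) : G \in D -> dot o (etaG G) = u.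
Proof.
move=> GD; case: Hf => _ /(_ (etaG G)) [H _]; apply: (proj2 (H _)).
exists (fun H => if H == G then 1 else 0); split.
- by move=> H0; case: eqP.
- by move=> H0; case: eqP => // ->; rewrite GD.
- by rewrite (bigD1 G) //= eqxx big1 ?addr0 // => H0 /negbTE ->.
- move=> i; rewrite (bigD1 G) //= eqxx mul1r big1 ?addr0 // => H0 /negbTE ->; by rewrite mul0r.
Qed.

Lemma dot_in (G : DAG N) : dot o (etaG G) = u -> G \in D.
Proof.
move=> E; apply: conv_in; case: Hf => _ /(_ (etaG G)) [_ H]; apply: H; split => //; exact: eta_P.
Qed.

Lemma dot_swap (v1 v2 w1 w2 : vec N R) :
  (forall i, v1 i + v2 i = w1 i + w2 i) -> dot o v1 + dot o v2 = dot o w1 + dot o w2.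
Proof.
move=> E; rewrite /dot -!big_split /=; apply: eq_bigr => i _; by rewrite -!mulrDr E.
Qed.

Lemma swap_in (G H G' H' : DAG N) : G \in D -> H \in D ->
  (forall i, etaG G i + etaG H i = etaG G' i + etaG H' i) -> G' \in D.
Proof.
move=> GD HD E; apply: dot_in; have := dot_swap E; rewrite (inD_dot GD) (inD_dot HD).
have := dot_le G'; have := dot_le H'; lra.
Qed.

End Face.

End M2.
Import M2.

Module M3.
Local Open Scope ring_scope.

Section LinAlg.
Variable N : finType.
Variable R : realFieldType.
Notation etaG := (Defs.eta R).

Definition emptyg : graph N := [ffun _ => set0].
Lemma emptyg_acyc : acyclicb emptyg.
Proof. by apply: (@acyc_of_rank _ _ (fun _ => 0%N)) => x y; rewrite /arrow ffunE inE. Qed.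
Definition emptyD := mkDAG emptyg_acyc.

Lemma eta_empty i : etaG emptyD i = 0.
Proof.
rewrite etaE /pa /= ffunE; case: i => [[a B] /= /andP [HB _]].
by rewrite eq_sym (negbTE HB).
Qed.

Definition singg (i : Upsilon N) : graph N :=
  [ffun x => if x == (val i).1 then (val i).2 else set0].
Lemma singg_acyc i : acyclicb (singg i).
Proof.
apply: (@acyc_of_rank _ _ (fun x => nat_of_bool (x == (val i).1))) => x y.
rewrite /arrow ffunE; case: eqP => [Ey|_]; last by rewrite inE.
case: i {Ey} => [[a B] /= /andP [_ Ha]] HxB.
have : x != a by apply: contraNneq Ha => <-.
by move=> /negbTE ->.
Qed.
Definition singD i := mkDAG (singg_acyc i).

Lemma eta_sing i j : etaG (singD i) j = if j == i then 1 else 0.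
Proof.
rewrite etaE /pa /= ffunE.
case: i j => [[a B] HaB] [[b C] HbC] /=.
have -> : (exist (fun p : N * {set N} => upsb p) (b, C) HbC ==
    exist (fun p : N * {set N} => upsb p) (a, B) HaB) = ((b, C) == (a, B)) by [].
rewrite xpair_eqE.
case: (eqVneq b a) => [Eb|Hba] /=; first by rewrite eq_sym.
move: HbC => /andP [HC _]; by rewrite eq_sym (negbTE HC).
Qed.

Definition rv (w : vec N R) : 'rV[R]_#|{: Upsilon N}| := \row_j w (enum_val j).

Lemma rank_setT (G0 : DAG N) : \rank (diff_mx R setT G0) = #|{: Upsilon N}|.
Proof.
apply/eqP; rewrite eqn_leq rank_leq_col /=.
rewrite -{1}(mxrank1 R #|{: Upsilon N}|); apply: mxrankS.
apply/row_subP => k; rewrite row1.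
set M := diff_mx R setT G0.
have Hrow : forall G : DAG N, (\row_j (etaG G (enum_val j) - etaG G0 (enum_val j)) <= M)%MS.
  move=> G; apply: (eq_row_sub (enum_rank G)); apply/rowP => j.
  by rewrite !mxE enum_rankK in_setT.
have -> : 'e_k = \row_j (etaG (singD (enum_val k)) (enum_val j) - etaG G0 (enum_val j))
   + (-1) *: \row_j (etaG emptyD (enum_val j) - etaG G0 (enum_val j)).
  apply/rowP => j; rewrite !mxE eta_sing eta_empty (inj_eq enum_val_inj).
  case: (eqVneq j k) => [->|Hjk]; rewrite ?eqxx /=; ring.
by apply: addmx_sub; [apply: Hrow | apply: scalemx_sub; apply: Hrow].
Qed.

Lemma affdim_setT : affdim R [set: DAG N] = #|{: Upsilon N}|%:Z.
Proof.
rewrite /affdim; case: pickP => [G0 _|H]; first by rewrite rank_setT.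
by move: (H emptyD); rewrite in_setT.
Qed.

Lemma Ups_gt0 : (2 <= #|N|)%N -> (0 < #|{: Upsilon N}|)%N.
Proof.
move=> /card_gt1P [x [y [_ _ Hxy]]].
have Hu : upsb (x, [set y]).
  rewrite /upsb /= in_set1 Hxy andbT; apply/set0Pn; exists y; by rewrite in_set1.
by apply/card_gt0P; exists (mkU Hu).
Qed.

Variable D : {set DAG N}.
Variables (o : vec N R) (u : R).
Hypothesis Hf : face_by o u (conv D).
Hypothesis Hdim : affdim R D = affdim R [set: DAG N] - 1.
Hypothesis Hn : (2 <= #|N|)%N.

Lemma facet_G0 : exists2 G0, G0 \in D & \rank (diff_mx R D G0) = (#|{: Upsilon N}| - 1)%N.
Proof.
move: Hdim; rewrite affdim_setT /affdim; case: pickP => [G0 HG0|_].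
  move=> E; exists G0 => //; move: E; rewrite subzn ?Ups_gt0 //; by case.
move=> E; exfalso; have := Ups_gt0 Hn; move: E; move: #|{: Upsilon N}| => k E Hk; lia.
Qed.

Lemma o_nz : exists i, o i != 0.
Proof.
case: facet_G0 => G0 HG0 _.
case: (pickP (fun i => o i != 0)) => [i Hi|Ho]; first by exists i.
have o0 : forall v, dot o v = 0.
  by move=> v; rewrite /dot big1 // => i _; move/negbFE/eqP: (Ho i) ->; rewrite mul0r.
have u0 : u = 0 by rewrite -(inD_dot Hf HG0) o0.
have DT : D = setT.
  apply/setP => G; rewrite in_setT; apply: (dot_in Hf); by rewrite o0 u0.
move: Hdim; rewrite DT => /eqP; rewrite -subr_eq0 opprB addrC subrK.
by rewrite oner_eq0.
Qed.

Lemma sum_ev (F : Upsilon N -> R) :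
  \sum_(j < #|{: Upsilon N}|) F (enum_val j) = \sum_i F i.
Proof. by rewrite -big_enum_val. Qed.

Lemma F3 (w : vec N R) (t : R) :
  (forall G, G \in D -> dot w (etaG G) = t) -> exists a, forall i, w i = a * o i.
Proof.
move=> Hw; case: facet_G0 => G0 HG0 Hrk.
set M := diff_mx R D G0.
have ker : forall v : vec N R, (forall G, G \in D -> dot v (etaG G) = dot v (etaG G0)) ->
    (rv v <= kermx M^T)%MS.
  move=> v Hv; apply/sub_kermxP; apply/rowP => k; rewrite !mxE.
  rewrite (eq_bigr (fun j => v (enum_val j) * (if enum_val k \in D then
        etaG (enum_val k) (enum_val j) - etaG G0 (enum_val j) else 0))); last first.
    by move=> j _; rewrite !mxE.
  case Hk: (enum_val k \in D); last by rewrite big1 // => j _; rewrite mulr0.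
  rewrite (eq_bigr (fun j => v (enum_val j) * etaG (enum_val k) (enum_val j)
                - v (enum_val j) * etaG G0 (enum_val j))); last by move=> j _; rewrite mulrBr.
  rewrite sumrB (sum_ev (fun i => v i * etaG _ i)) (sum_ev (fun i => v i * etaG _ i)).
  by rewrite -/(dot v _) -/(dot v _) Hv // subrr.
have Ko : (rv o <= kermx M^T)%MS.
  by apply: ker => G HG; rewrite (inD_dot Hf HG) (inD_dot Hf HG0).
have Kw : (rv w <= kermx M^T)%MS.
  by apply: ker => G HG; rewrite Hw // Hw.
have rK : \rank (kermx M^T) = 1%N.
  rewrite mxrank_ker mxrank_tr Hrk; have := Ups_gt0 Hn.
  by case: #|{: Upsilon N}| => // k _; rewrite subSS subn0 subSnn.
have ro : \rank (rv o) = 1%N.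
  rewrite rank_rV; case: o_nz => i Hi; apply/eqP; rewrite eqb1.
  apply/eqP => /rowP /(_ (enum_rank i)); rewrite !mxE enum_rankK => Eo.
  by rewrite Eo eqxx in Hi.
have KO : (kermx M^T <= rv o)%MS.
  by have := mxrank_leqif_sup Ko; rewrite ro rK => /leqif_refl.
case/sub_rVP: (submx_trans Kw KO) => a Ea.
exists a => i; have := congr1 (fun m : 'rV_ _ => m 0 (enum_rank i)) Ea.
by rewrite /= !mxE enum_rankK.
Qed.

End LinAlg.

End M3.
Import M3.

Module M4.

Section Graphs.
Variable N : finType.

Definition setpa (g : graph N) (y : N) (P : {set N}) : graph N :=
  [ffun z => if z == y then P else g z].

Lemma arrow_setpa g y P p q :
  arrow (setpa g y P) p q = if q == y then p \in P else arrow g p q.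
Proof. by rewrite /arrow ffunE; case: ifP. Qed.

Lemma sub_acyc (G : DAG N) (g : graph N) : (forall z, g z \subset val G z) -> acyclicb g.
Proof.
move=> Hs; apply/forallP => p; apply/forallP => q; apply/implyP => Hpq.
have Hsub : subrel (arrow g) (connect (arrow (val G))).
  by move=> a b Hab; apply: connect1; move/subsetP: (Hs b); apply.
apply/negP => /(connect_sub Hsub) Hqp.
have : arrow (val G) p q by move/subsetP: (Hs q); apply.
by move/acycP; rewrite Hqp.
Qed.

Lemma conn_add (G : DAG N) x y a b :
  connect (arrow (setpa (val G) y (x |: val G y))) a b ->
  connect (arrow (val G)) a b \/
  (connect (arrow (val G)) a x /\ connect (arrow (val G)) y b).
Proof.
move=> /connectP [p Hp ->] {b}.
elim: p a Hp => [|z p IH] a /=; first by left; rewrite connect0.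
move=> /andP [Haz Hp]; have := IH _ Hp.
have old : arrow (val G) a z -> connect (arrow (val G)) z (last z p) \/
  connect (arrow (val G)) z x /\ connect (arrow (val G)) y (last z p) ->
  connect (arrow (val G)) a (last z p) \/
  connect (arrow (val G)) a x /\ connect (arrow (val G)) y (last z p).
  move=> Hg [H1|[H1 H2]]; [left|right; split => //];
  by apply: connect_trans (connect1 Hg) H1.
move: Haz; rewrite arrow_setpa; case: eqP => [Ez|_]; last exact: old.
rewrite in_setU1; case/orP => [/eqP Ea|Hay].
  move=> _; right; split; first by rewrite Ea connect0.
  by case: (IH _ Hp) => [H|[_ H]] //; rewrite -Ez.
by apply: old; rewrite Ez.
Qed.

Lemma add_acyc (G : DAG N) x y : ~~ connect (arrow (val G)) y x ->
  acyclicb (setpa (val G) y (x |: val G y)).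
Proof.
move=> Hyx; apply/forallP => p; apply/forallP => q; apply/implyP => Hpq.
apply/negP => /conn_add Hc.
have Hold : arrow (val G) p q \/ (p = x /\ q = y).
  move: Hpq; rewrite arrow_setpa; case: eqP => [Eq|_]; last by left.
  rewrite in_setU1; case/orP => [/eqP ->|H]; first by right.
  by left; rewrite Eq.
case: Hold => [Ho|[Ep Eq]]; case: Hc => [H|[H1 H2]]; try subst p q.
- by move: (acycP Ho); rewrite H.
- by move: Hyx; rewrite (connect_trans H2 (connect_trans (connect1 Ho) H1)).
- by move: Hyx; rewrite H.
- by move: Hyx; rewrite H2.
Qed.

Definition nedges (G : DAG N) : nat := \sum_a #|pa G a|.

End Graphs.

Section Closed.
Variable N : finType.
Variable R : realFieldType.
Notation etaG := (Defs.eta R).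
Local Open Scope ring_scope.

Variable D : {set DAG N}.
Variables (o : vec N R) (u : R).
Hypothesis Hf : face_by o u (conv D).
Hypothesis Hdim : affdim R D = affdim R [set: DAG N] - 1.
Hypothesis Hn : (2 <= #|N|)%N.

Lemma dot_scale (w : vec N R) a v : (forall i, w i = a * o i) -> dot w v = a * dot o v.
Proof. by move=> E; rewrite /dot mulr_sumr; apply: eq_bigr => i _; rewrite E mulrA. Qed.

Lemma dot_ind (i0 : Upsilon N) (v : vec N R) : dot (fun i => (if i == i0 then 1 else 0 : R)) v = v i0.
Proof.
rewrite /dot (bigD1 i0) //= eqxx mul1r big1 ?addr0 // => i /negbTE ->; by rewrite mul0r.
Qed.

Hypothesis Hcl : closed_under_ME D.

Lemma all_fam (y : N) (B : {set N}) (Hu : upsb (y, B)) : exists2 H, H \in D & pa H y = B.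
Proof.
case: (pickP (fun H => (H \in D) && (pa H y == B))) => [H /andP [HD /eqP E]|Hno].
  by exists H.
exfalso.
set w : vec N R := fun i => if i == mkU Hu then 1 else 0.
have dw : forall G, dot w (etaG G) = if pa G y == B then 1 else 0.
  by move=> G; rewrite /w dot_ind etaE.
have [a Ha] : exists a, forall i, w i = a * o i.
  apply: (F3 Hf Hdim Hn (t := 0)) => G GD; rewrite dw.
  by move: (Hno G); rewrite GD /= => ->.
have a0 : a != 0.
  by apply/eqP => a0; move: (Ha (mkU Hu)); rewrite /w eqxx a0 mul0r => /eqP; rewrite oner_eq0.
case: (facet_G0 Hdim Hn) => G0 HG0 _.
have u0 : u = 0.
  have := dw G0; rewrite (dot_scale _ Ha) (inD_dot Hf HG0).
  move: (Hno G0); rewrite HG0 /= => -> /eqP; rewrite mulf_eq0 (negbTE a0) /= => /eqP //.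
have HBy : y \notin B by case/andP: (Hu).
have HB0 : B != set0 by case/andP: (Hu).
set K1 := fullD (fun x => nat_of_bool (x != y)).
set K2 := fullD (fun x => if x \in B then 0%N else if x == y then 1%N else 2%N).
have pK1 : pa K1 y = set0.
  apply/setP => z; rewrite inE pa_fullD key_lt eqxx /=.
  by case: (eqVneq z y) => [->|_]; rewrite ?ltnn ?andbF.
have pK2 : pa K2 y = B.
  apply/setP => z; rewrite pa_fullD key_lt (negbTE HBy) eqxx.
  by case: (z \in B) => //; case: (eqVneq z y) => [->|_]; rewrite ?ltnn ?andbF.
have K1D : K1 \in D.
  apply: (dot_in Hf); apply/eqP; rewrite u0.
  have := dw K1; rewrite (dot_scale _ Ha) pK1 eq_sym (negbTE HB0) => /eqP.
  by rewrite mulf_eq0 (negbTE a0).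
have K2D : K2 \in D by apply: (Hcl (full_ME (full_fullD _) (full_fullD _)) K1D).
by move: (Hno K2); rewrite K2D pK2 eqxx.
Qed.

Lemma closed_full : contains_full D.
Proof.
case: (facet_G0 Hdim Hn) => G0 HG0 _.
have [G GD Gmax] : exists2 G, G \in D & forall H, H \in D -> (nedges H <= nedges G)%N.
  by case: (arg_maxnP (@nedges N) HG0) => G GD Gm; exists G.
suff FG : full_graph G.
  by move=> K FK; apply: (Hcl (full_ME FG FK) GD).
case: (pickP (fun p : N * N => (p.1 != p.2) && ~~ adj G p.1 p.2)) => [[x y] /= /andP [Hxy Hadj]|Hnone]; last first.
  move=> a b Hab; have := Hnone (a, b); rewrite /= Hab /=; by move/negbFE.
exfalso.
have [x' [y' [Hne [Hna Hnc]]]] : exists x' y', [/\ x' != y', ~~ adj G x' y' & ~~ connect (arrow (val G)) y' x'].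
  case: (boolP (connect (arrow (val G)) y x)) => Hc.
  - exists y, x; split; first by rewrite eq_sym.
    + by rewrite /adj orbC.
    + by apply: (connect_antisym _ Hc); rewrite eq_sym.
  - by exists x, y.
set B := x' |: pa G y'.
have Hu : upsb (y', B).
  rewrite /upsb /=; apply/andP; split.
    by apply/set0Pn; exists x'; rewrite in_setU1 eqxx.
  by rewrite in_setU1 negb_or notin_pa andbT eq_sym.
case: (all_fam Hu) => H HD HB.
set G' := mkDAG (add_acyc Hnc).
have Hsub : forall z, setpa (val H) y' (pa G y') z \subset val H z.
  move=> z; rewrite ffunE; case: eqP => [->|_] //.
  by rewrite -[val H y']/(pa H y') HB subsetUr.
set H' := mkDAG (sub_acyc Hsub).
have G'D : G' \in D.
  apply: (swap_in Hf GD HD (H' := H')) => i.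
  move: HB; rewrite !etaE /pa /= !ffunE => HB.
  case: (eqVneq (val i).1 y') => [Ei|Hi] //.
  by rewrite Ei HB addrC.
have := Gmax _ G'D; rewrite /nedges (bigD1 y') //= [X in (_ <= X)%N](bigD1 y') //=.
rewrite /pa /= ffunE eqxx.
have -> : \sum_(i | i != y') #|(setpa (val G) y' (x' |: val G y')) i| = \sum_(i | i != y') #|val G i|.
  by apply: eq_bigr => i /negbTE Hi; rewrite ffunE Hi.
rewrite cardsU1.
have -> : x' \notin val G y' by move: Hna; rewrite /adj negb_or => /andP [].
by rewrite /= add1n addSn ltnn.
Qed.

End Closed.

End M4.
Import M4.

Module M5.
Local Open Scope ring_scope.

Section Score.
Variable N : finType.
Variable R : realFieldType.
Notation etaG := (Defs.eta R).
Variable o : vec N R.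

Definition oo (a : N) (B : {set N}) : R :=
  if @insub _ (@upsb N) (Upsilon N) (a, B) is Some i then o i else 0.

Lemma ooE a B (H : upsb (a, B)) : oo a B = o (mkU H).
Proof. by rewrite /oo insubT /=; congr (o _); apply: val_inj. Qed.

Lemma oo_sum a B : oo a B = \sum_(i : Upsilon N) (if val i == (a, B) then o i else 0).
Proof.
case Hu: (upsb (a, B)).
- rewrite (ooE Hu) (bigD1 (mkU Hu)) //= eqxx big1 ?addr0 // => i Hi.
  case: eqP => // E; by move: Hi; rewrite -(inj_eq val_inj) /= E eqxx.
- rewrite /oo insubF // big1 // => i _; case: eqP => // E.
  by move: (valP i); rewrite E Hu.
Qed.

Lemma score (G : DAG N) : dot o (etaG G) = \sum_a oo a (pa G a).
Proof.
have -> : \sum_a oo a (pa G a) = \sum_a \sum_(i : Upsilon N) (if val i == (a, pa G a) then o i else 0).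
  by apply: eq_bigr => a _; rewrite oo_sum.
rewrite exchange_big /dot; apply: eq_bigr => i _.
rewrite (bigD1 (val i).1) //= big1 ?addr0; last first.
  by move=> a Ha; case: eqP => // E; move: Ha; rewrite E eqxx.
rewrite etaE; case: i => [[a B] Hi] /=; rewrite xpair_eqE eqxx /= eq_sym.
by case: eqP; rewrite ?mulr1 ?mulr0.
Qed.

Definition rk (x : N) : nat := enum_rank x.

Definition f (S : {set N}) : R := \sum_(x in S) oo x [set z in S | rk z < rk x]%N.

Lemma f_max (S : {set N}) x : x \in S -> (forall z, z \in S -> rk z <= rk x)%N ->
  f S = oo x (S :\ x) + f (S :\ x).
Proof.
move=> xS Hmax; rewrite /f (bigD1 x) //=; congr (_ + _).
  congr (oo _ _); apply/setP => z; rewrite !inE.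
  case: (eqVneq z x) => [->|Hzx] /=; first by rewrite ltnn andbF.
  case zS: (z \in S) => //=; rewrite ltn_neqAle Hmax // andbT.
  apply/negP => /eqP E; move/eqP: Hzx; apply; apply: enum_rank_inj; exact: val_inj E.
apply: eq_big => [z|z /andP [zS Hzx]]; first by rewrite !inE andbC.
congr (oo _ _); apply/setP => w; rewrite !inE.
case: (eqVneq w x) => [->|//] /=.
rewrite xS andTb; apply/negbTE; rewrite -leqNgt; exact: Hmax.
Qed.

Hypothesis L : forall (a b : N) (C : {set N}), a != b -> a \notin C -> b \notin C ->
  oo a C + oo b (a |: C) = oo b C + oo a (b |: C).

Lemma g_lemma (B : {set N}) (a : N) : a \notin B -> oo a B = f (a |: B) - f B.
Proof.
move: {2}#|B|.+1 (ltnSn #|B|) => k; elim: k B a => // k IH B a HB aB.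
set S := a |: B.
have aS : a \in S by rewrite /S in_setU1 eqxx.
have [x xS xmax] : exists2 x, x \in S & forall z, z \in S -> (rk z <= rk x)%N.
  by case: (arg_maxnP rk aS) => x xS Hm; exists x.
case: (eqVneq x a) => [Exa|Hxa].
  rewrite (f_max xS xmax) Exa.
  have -> : S :\ a = B by rewrite /S setU1K.
  by rewrite addrK.
have xB : x \in B by move: xS; rewrite /S in_setU1 (negbTE Hxa).
set C := B :\ x.
have HSx : S :\ x = a |: C.
  apply/setP => z; rewrite /S /C !inE.
  by case: (eqVneq z x) => [->|] //=; rewrite (negbTE Hxa).
have xmaxB : forall z, z \in B -> (rk z <= rk x)%N.
  by move=> z zB; apply: xmax; rewrite /S in_setU1 zB orbT.
rewrite (f_max xS xmax) (f_max xB xmaxB) HSx -/C.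
have aC : a \notin C by rewrite /C !inE negb_and aB orbT.
have HC : (#|C| < k)%N by move: HB; rewrite /C (cardsD1 x B) xB add1n ltnS.
have := IH C a HC aC => Ha.
have xC : x \notin C by rewrite /C !inE eqxx.
have Hax : a != x by rewrite eq_sym.
have HL := L Hax aC xC.
rewrite /C (setD1K xB) -/C in HL.
have Hfa : f (a |: C) = oo a C + f C by rewrite Ha subrK.
rewrite Hfa; lra.
Qed.

End Score.

End M5.
Import M5.

Module M6.
Local Open Scope ring_scope.

Section Moebius.
Variable N : finType.
Variable R : realFieldType.
Variable F : {set N} -> R.

Fixpoint mob (k : nat) (T : {set N}) : R :=
  if k is k'.+1 then F T - \sum_(U : {set N} | U \proper T) mob k' U else 0.

Lemma mob_eq k j (T : {set N}) : (#|T| < k)%N -> (#|T| < j)%N -> mob k T = mob j T.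
Proof.
elim: k j T => // k IH [|j] T // Hk Hj /=; congr (_ - _); apply: eq_bigr => U HU.
have HUT := proper_card HU.
by apply: IH; apply: leq_trans HUT _; rewrite -ltnS.
Qed.

Lemma moebius : exists m : {set N} -> R, forall S, F S = \sum_(T : {set N} | T \subset S) m T.
Proof.
exists (mob #|N|.+1) => S.
rewrite (bigD1 S) //=.
have -> : \sum_(T : {set N} | (T \subset S) && (T != S)) mob #|N|.+1 T =
          \sum_(U : {set N} | U \proper S) mob #|N| U.
  apply: eq_big => [T|T].
    by rewrite properEneq andbC.
  move=> /andP [HTS HTne].
  have HT : (#|T| < #|N|)%N.
    apply: (@leq_trans #|S|); last exact: max_card.
    by apply: proper_card; rewrite properEneq HTne HTS.
  by apply: mob_eq => //; apply: ltnW.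
by rewrite /= subrK.
Qed.

End Moebius.

Section CL.
Variable N : finType.

Definition cnt (G : DAG N) (T : {set N}) : nat := #|[set a in T | T :\ a \subset pa G a]|.

Lemma ME_sym (G H : DAG N) : markov_equiv G H -> markov_equiv H G.
Proof. by case=> H1 H2; split => *; rewrite ?H1 ?H2. Qed.

Lemma sink_exists (H : DAG N) (T : {set N}) a : a \in T ->
  exists2 b, b \in T & forall c, c \in T -> b \notin pa H c.
Proof.
move=> aT.
pose anc b := #|[set z in T | connect (arrow (val H)) z b]|.
case: (arg_maxnP anc aT) => b bT bmax; exists b => // c cT.
apply/negP => Hbc.
have Hp : [set z in T | connect (arrow (val H)) z b] \proper [set z in T | connect (arrow (val H)) z c].
  apply/properP; split.
    apply/subsetP => z; rewrite !inE => /andP [-> Hz] /=.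
    by apply: connect_trans Hz (connect1 _).
  exists c; first by rewrite inE cT connect0.
  by rewrite inE cT /=; apply: (acycP Hbc).
move: (bmax _ cT); rewrite /anc. move=> Hle; have := proper_card Hp; rewrite ltnNge => /negP; apply; exact: Hle.
Qed.

Lemma cnt_le1 (G : DAG N) T : (cnt G T <= 1)%N.
Proof.
apply/card_le1_eqP => a a'; rewrite !inE => /andP [aT Ha] /andP [a'T Ha'].
apply/eqP; apply/negPn/negP => Hne.
have H1 : a' \in pa G a by move/subsetP: Ha; apply; rewrite !inE Hne.
have H2 : a \in pa G a' by move/subsetP: Ha'; apply; rewrite !inE eq_sym Hne.
by move: (acycP H1); rewrite connect1.
Qed.

Lemma cnt_pos (G H : DAG N) T : markov_equiv G H -> (0 < cnt G T)%N -> (0 < cnt H T)%N.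
Proof.
case=> Hadj Himm /card_gt0P [a]; rewrite inE => /andP [aT Ha].
case: (sink_exists H aT) => b bT bsink.
apply/card_gt0P; exists b; rewrite inE bT /=.
apply/subsetP => x; rewrite !inE => /andP [Hxb xT].
have Hadjxb : adj G x b.
  case: (eqVneq x a) => [Exa|Hxa].
    have bpa : b \in pa G a by move/subsetP: Ha; apply; rewrite !inE bT andbT -Exa eq_sym.
    by rewrite /adj Exa bpa orbT.
  have xpa : x \in pa G a by move/subsetP: Ha; apply; rewrite !inE Hxa xT.
  case: (eqVneq b a) => [Eba|Hba]; first by rewrite /adj -Eba in xpa *; rewrite xpa.
  have bpa : b \in pa G a by move/subsetP: Ha; apply; rewrite !inE Hba bT.
  apply/negPn/negP => Hna.
  have : immorality G x a b by rewrite /immorality xpa bpa Hxb Hna.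
  rewrite Himm /immorality => /and4P [_ Hb _ _].
  by move: (bsink _ aT); rewrite Hb.
move: Hadjxb; rewrite Hadj /adj; case/orP => // Hbx.
by move: (bsink _ xT); rewrite Hbx.
Qed.

Lemma cnt_ME (G H : DAG N) T : markov_equiv G H -> cnt G T = cnt H T.
Proof.
move=> HME.
have := cnt_le1 G T; have := cnt_le1 H T.
have := cnt_pos (T:=T) HME; have := cnt_pos (T:=T) (ME_sym HME).
case: (cnt G T) => [|[|k]]; case: (cnt H T) => [|[|l]] //;
  first [by move=> /(_ isT) | by move=> _ /(_ isT)].
Qed.

End CL.

End M6.
Import M6.

Module M7.
Local Open Scope ring_scope.

Section SE.
Variable N : finType.
Variable R : realFieldType.
Notation etaG := (Defs.eta R).
Variable o : vec N R.

Lemma sub_ident (x : R) (a : N) (P T : {set N}) : a \notin P ->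
  (if T \subset a |: P then x else 0) - (if T \subset P then x else 0)
  = if (a \in T) && (T :\ a \subset P) then x else 0.
Proof.
move=> aP; have E : (T \subset a |: P) = (T :\ a \subset P) by rewrite subDset.
rewrite E; case aT: (a \in T) => /=.
  have -> : (T \subset P) = false.
    by apply/negbTE/negP => /subsetP /(_ a aT); rewrite (negbTE aP).
  by rewrite subr0.
have -> : T :\ a = T.
  by apply/setP => z; rewrite !inE; case: eqP => [->|] //=; rewrite aT.
by rewrite subrr.
Qed.

Hypothesis L : forall (a b : N) (C : {set N}), a != b -> a \notin C -> b \notin C ->
  oo o a C + oo o b (a |: C) = oo o b C + oo o a (b |: C).

Lemma SE_of_L : SE_objective o.
Proof.
case: (moebius (f o)) => m Hm0.
have Hm : forall S, f o S = \sum_(T : {set N}) (if T \subset S then m T else 0).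
  by move=> S; rewrite Hm0 big_mkcond.
have sc : forall G : DAG N, dot o (etaG G) = \sum_(T : {set N}) m T *+ cnt G T.
  move=> G; rewrite score.
  rewrite (eq_bigr (fun a => \sum_(T : {set N}) (if (a \in T) && (T :\ a \subset pa G a) then m T else 0))); last first.
    move=> a _; rewrite (g_lemma L (notin_pa G a)) !Hm -sumrB.
    by apply: eq_bigr => T _; rewrite sub_ident // notin_pa.
  rewrite exchange_big; apply: eq_bigr => T _.
  rewrite -big_mkcond /= (eq_bigl (fun a => a \in [set a in T | T :\ a \subset pa G a])); last first.
    by move=> a; rewrite inE.
  by rewrite sumr_const.
move=> G H HME; rewrite !sc; apply: eq_bigr => T _; by rewrite (cnt_ME T HME).
Qed.

End SE.

Section Main.
Variable N : finType.
Variable R : realFieldType.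
Notation etaG := (Defs.eta R).

Lemma split2 (F : N -> R) (a b : N) : a != b ->
  \sum_x F x = F a + F b + \sum_(x | (x != a) && (x != b)) F x.
Proof.
move=> ab; rewrite (bigD1 a) //= (bigD1 b) //=; last by rewrite eq_sym.
by rewrite addrA; congr (_ + _); apply: eq_bigl => x; rewrite andbC.
Qed.

Lemma L_from_full (D : {set DAG N}) (o : vec N R) (u : R) :
  face_by o u (conv D) -> contains_full D ->
  forall (a b : N) (C : {set N}), a != b -> a \notin C -> b \notin C ->
  oo o a C + oo o b (a |: C) = oo o b C + oo o a (b |: C).
Proof.
move=> Hf Hfull a b C ab aC bC.
pose cl1 := fun x => if x \in C then 0%N else if x == a then 1%N else if x == b then 2%N else 3%N.
pose cl2 := fun x => if x \in C then 0%N else if x == b then 1%N else if x == a then 2%N else 3%N.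
set K1 := fullD cl1; set K2 := fullD cl2.
have ba : b != a by rewrite eq_sym.
have s12 : dot o (etaG K1) = dot o (etaG K2).
  by rewrite (inD_dot Hf (Hfull _ (full_fullD _))) (inD_dot Hf (Hfull _ (full_fullD _))).
have p1a : pa K1 a = C.
  apply/setP => z; rewrite pa_fullD key_lt /cl1 (negbTE aC) eqxx.
  case: (z \in C) => //; case: (eqVneq z a) => [->|za]; rewrite ?eqxx ?ltnn ?andbF //.
  by case: (z == b).
have p1b : pa K1 b = a |: C.
  apply/setP => z; rewrite in_setU1 pa_fullD key_lt /cl1 (negbTE bC) (negbTE ba) eqxx.
  case: (z \in C); rewrite ?orbT //; case: (eqVneq z a) => [->|za] //=.
  case: (eqVneq z b) => [->|zb]; rewrite ?ltnn ?andbF //.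
have p2b : pa K2 b = C.
  apply/setP => z; rewrite pa_fullD key_lt /cl2 (negbTE bC) eqxx.
  case: (z \in C) => //; case: (eqVneq z b) => [->|zb]; rewrite ?eqxx ?ltnn ?andbF //.
  by case: (z == a).
have p2a : pa K2 a = b |: C.
  apply/setP => z; rewrite in_setU1 pa_fullD key_lt /cl2 (negbTE aC) (negbTE ab) eqxx.
  case: (z \in C); rewrite ?orbT //; case: (eqVneq z b) => [->|zb] //=.
  case: (eqVneq z a) => [->|za]; rewrite ?ltnn ?andbF //.
have pother : forall x, x != a -> x != b -> pa K1 x = pa K2 x.
  move=> x xa xb; apply/setP => z; rewrite !pa_fullD !key_lt /cl1 /cl2 (negbTE xa) (negbTE xb).
  case: (z \in C) => //.
  case: (eqVneq z a) => [->|za].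
    by rewrite (negbTE ab); case: (x \in C).
  case: (eqVneq z b) => [->|zb].
    by case: (x \in C).
  by [].
move: s12; rewrite !score.
rewrite !(split2 _ ab).
rewrite p1a p1b p2a p2b.
have -> : \sum_(i | (i != a) && (i != b)) oo o i (pa K1 i) = \sum_(i | (i != a) && (i != b)) oo o i (pa K2 i).
  by apply: eq_bigr => x /andP [xa xb]; rewrite pother.
move=> E; lra.
Qed.

Lemma SE_closed (D : {set DAG N}) : is_SE R D -> closed_under_ME D.
Proof.
case=> o [u [HSE Hf]] G H HME GD.
apply: (dot_in Hf); rewrite -(HSE _ _ HME); exact: (inD_dot Hf GD).
Qed.

End Main.


End M7.
Import M7.

Theorem theorem1 (R : realFieldType) (N : finType) (D : {set DAG N}) :
  (2 <= #|N|)%N ->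
  is_facet R D ->
  (closed_under_ME D <-> contains_full D) /\
  (contains_full D <-> is_SE R D).
Proof.
move=> Hn [[o [u Hf]] Hdim].
have full_SE : contains_full D -> is_SE R D.
  move=> Hfull; exists o, u; split => //.
  apply: SE_of_L; exact: (L_from_full Hf Hfull).
have cl_full : closed_under_ME D -> contains_full D.
  by move=> Hcl; apply: (closed_full Hf Hdim Hn Hcl).
split; split => //.
- by move=> /full_SE /SE_closed.
- by move=> /SE_closed /cl_full.
Qed.
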